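(* Let $A$ be a quantifier-free formula of $\mathbf{L}$ (i.e. a formula of $\mathbf{L_1}$). If $A$ is a theorem of $\mathbf{L}$, then $\vdash_H A$. That is, $\mathbf{L}$ is a conservative extension of the Hilbert-type $\mathbf{L_1}$.
   Context: Formulas of $\mathbf{L_1}$: built from atomic formulas $\epsilon ab$ ($a,b$ name variables, possibly equal) with primitive connectives $\vee,\sim$; $\wedge,\supset,\equiv$ defined as usual. $\vdash_H A$: $A$ belongs to the smallest set containing all instances of classical propositional tautologies and all formulas $\epsilon ab\supset\epsilon aa$, $(\epsilon ab\wedge\epsilon bc)\supset\epsilon ac$, $(\epsilon ab\wedge\epsilon bb)\supset\epsilon ba$, closed under modus ponens. Leśniewski's elementary ontology $\mathbf{L}$: the first-order theory (in classical first-order predicate logic without equality) whose language has the name variables as individual variables and a single binary predicate $\epsilon$, with the axiom (universal closure of) $\epsilon ab\equiv\big(\exists x(\epsilon xa\wedge\epsilon xb)\wedge\forall x\forall y(\epsilon xa\wedge\epsilon ya\supset\epsilon xy)\big)$. Formulas of $\mathbf{L_1}$ are exactly the quantifier-free formulas of $\mathbf{L}$. *)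

(* Defs.v *)
From Stdlib Require Import Arith Bool.

Inductive form : Type :=
| Eps : nat -> nat -> form
| Or  : form -> form -> form
| Neg : form -> form
| All : nat -> form -> form.

Definition Imp (A B : form) : form := Or (Neg A) B.
Definition And (A B : form) : form := Neg (Or (Neg A) (Neg B)).
Definition Eqv (A B : form) : form := And (Imp A B) (Imp B A).
Definition Ex (x : nat) (A : form) : form := Neg (All x (Neg A)).

Fixpoint qf (A : form) : bool :=
  match A with
  | Eps _ _ => true
  | Or A B => qf A && qf B
  | Neg A => qf A
  | All _ _ => false
  end.

Inductive pform : Type :=
| PVar : nat -> pform
| POr  : pform -> pform -> pform
| PNeg : pform -> pform.

Fixpoint peval (v : nat -> bool) (P : pform) : bool :=
  match P with
  | PVar n => v n
  | POr P Q => peval v P || peval v Q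
  | PNeg P => negb (peval v P)
  end.

Definition tautology (P : pform) : Prop := forall v, peval v P = true.

Fixpoint pinst (s : nat -> form) (P : pform) : form :=
  match P with
  | PVar n => s n
  | POr P Q => Or (pinst s P) (pinst s Q)
  | PNeg P => Neg (pinst s P)
  end.

Definition taut_instance (ok : form -> Prop) (A : form) : Prop :=
  exists (P : pform) (s : nat -> form),
    tautology P /\ (forall n, ok (s n)) /\ pinst s P = A.

Inductive HProv : form -> Prop :=
| H_taut : forall A, taut_instance (fun B => qf B = true) A -> HProv A
| H_ax1 : forall a b, HProv (Imp (Eps a b) (Eps a a))
| H_ax2 : forall a b c, HProv (Imp (And (Eps a b) (Eps b c)) (Eps a c))
| H_ax3 : forall a b, HProv (Imp (And (Eps a b) (Eps b b)) (Eps b a))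
| H_mp : forall A B, HProv (Imp A B) -> HProv A -> HProv B.

Fixpoint free (x : nat) (A : form) : bool :=
  match A with
  | Eps a b => (a =? x) || (b =? x)
  | Or A B => free x A || free x B
  | Neg A => free x A
  | All z A => negb (z =? x) && free x A
  end.

Fixpoint subst (x y : nat) (A : form) : form :=
  match A with
  | Eps a b => Eps (if a =? x then y else a) (if b =? x then y else b)
  | Or A B => Or (subst x y A) (subst x y B)
  | Neg A => Neg (subst x y A)
  | All z A => if z =? x then All z A else All z (subst x y A)
  end.

Fixpoint freefor (y x : nat) (A : form) : bool :=
  match A with
  | Eps _ _ => true
  | Or A B => freefor y x A && freefor y x B
  | Neg A => freefor y x A
  | All z A =>
      if z =? x then true
      else (negb (z =? y) || negb (free x A)) && freefor y x A
  end.

(* The axiom of L (universal closure), with a = 0, b = 1, x = 2, y = 3: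
   forall a b, eps a b == (exists x (eps x a /\ eps x b) /\
                           forall x y (eps x a /\ eps y a -> eps x y)). *)
Definition L_axiom : form :=
  All 0 (All 1
    (Eqv (Eps 0 1)
         (And (Ex 2 (And (Eps 2 0) (Eps 2 1)))
              (All 2 (All 3 (Imp (And (Eps 2 0) (Eps 3 0)) (Eps 2 3))))))).

Inductive LProv : form -> Prop :=
| L_nonlog : LProv L_axiom
| L_taut : forall A, taut_instance (fun _ => True) A -> LProv A
| L_inst : forall x y A, freefor y x A = true ->
    LProv (Imp (All x A) (subst x y A))
| L_dist : forall x A B, free x A = false ->
    LProv (Imp (All x (Imp A B)) (Imp A (All x B)))
| L_mp : forall A B, LProv (Imp A B) -> LProv A -> LProv B
| L_gen : forall x A, LProv A -> LProv (All x A).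

(* Main.v *)
Require Import Defs.
From Stdlib Require Import Arith Bool List Classical ClassicalEpsilon Cantor Lia.
Import ListNotations.

Section Sem.
Variable D : Type.
Variable E : D -> D -> Prop.

Definition upd (r : nat -> D) (x : nat) (d : D) : nat -> D :=
  fun z => if z =? x then d else r z.

Fixpoint eval (r : nat -> D) (A : form) : Prop :=
  match A with
  | Eps a b => E (r a) (r b)
  | Or A B => eval r A \/ eval r B
  | Neg A => ~ eval r A
  | All z A => forall d, eval (upd r z d) A
  end.

Lemma coinc : forall A r r', (forall z, free z A = true -> r z = r' z) ->
  (eval r A <-> eval r' A).
Proof.
  induction A; intros r r' H; simpl.
  - rewrite (H n), (H n0); simpl; try tauto; rewrite Nat.eqb_refl; auto with bool.
  - rewrite (IHA1 r r'), (IHA2 r r'); try tauto; intros z Hz; apply H; simpl; rewrite Hz; auto with bool.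
  - rewrite (IHA r r'); try tauto; intros z Hz; apply H; simpl; auto.
  - split; intros H1 d; [rewrite <- (IHA (upd r n d)) | rewrite (IHA (upd r n d) (upd r' n d))]; auto;
    intros z Hz; unfold upd; destruct (Nat.eqb_spec z n); auto; apply H; simpl;
    rewrite Hz; destruct (Nat.eqb_spec n z); subst; simpl; auto; congruence.
Qed.

Lemma coinc_ext : forall A r r', (forall z, r z = r' z) -> (eval r A <-> eval r' A).
Proof. intros; apply coinc; auto. Qed.

Lemma subst_nofree : forall A x y, free x A = false -> subst x y A = A.
Proof.
  induction A; intros x y H; simpl in *.
  - apply orb_false_iff in H as [H1 H2]. rewrite H1, H2; auto.
  - apply orb_false_iff in H as [H1 H2]. rewrite IHA1, IHA2; auto.
  - rewrite IHA; auto.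
  - destruct (Nat.eqb_spec n x); auto. rewrite IHA; auto.
    all: apply andb_false_iff in H as [H|H]; auto; apply Nat.eqb_neq in n0; rewrite n0 in H; discriminate.
Qed.

Lemma subst_lemma : forall A x y r, freefor y x A = true ->
  (eval r (subst x y A) <-> eval (upd r x (r y)) A).
Proof.
  induction A; intros x y r H; simpl in *.
  - unfold upd. destruct (n =? x), (n0 =? x); tauto.
  - apply andb_true_iff in H as [H1 H2]. rewrite IHA1, IHA2; tauto.
  - rewrite IHA; tauto.
  - destruct (Nat.eqb_spec n x).
    + subst. simpl. split; intros H1 d; specialize (H1 d); eapply coinc_ext; try exact H1;
      intros z; unfold upd; destruct (z =? x); auto.
    + apply andb_true_iff in H as [H1 H2]. apply orb_true_iff in H1 as [H1|H1].
      * apply negb_true_iff, Nat.eqb_neq in H1.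
        simpl. split; intros H3 d; specialize (H3 d).
        -- rewrite IHA in H3 by auto. rewrite (coinc_ext A _ (upd (upd r n d) x (upd r n d y))); auto.
           intros z; unfold upd. destruct (Nat.eqb_spec z n), (Nat.eqb_spec z x), (Nat.eqb_spec y n); subst; congruence.
        -- rewrite IHA by auto. rewrite (coinc_ext A _ (upd (upd r x (r y)) n d)); auto.
           intros z; unfold upd. destruct (Nat.eqb_spec z n), (Nat.eqb_spec z x), (Nat.eqb_spec y n); subst; congruence.
      * apply negb_true_iff in H1. rewrite subst_nofree by auto. simpl.
        split; intros H3 d; specialize (H3 d); eapply coinc; try exact H3;
        intros z Hz; unfold upd; destruct (Nat.eqb_spec z n), (Nat.eqb_spec z x); subst; auto; congruence.
Qed.

Definition bP (P : Prop) : bool := if excluded_middle_informative P then true else false.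

Lemma pinst_eval : forall P s r,
  eval r (pinst s P) <-> peval (fun n => bP (eval r (s n))) P = true.
Proof.
  induction P; intros s r; simpl.
  - unfold bP; destruct excluded_middle_informative; split; auto; discriminate.
  - rewrite IHP1, IHP2, orb_true_iff; tauto.
  - rewrite IHP, negb_true_iff. destruct (peval _ P); split; auto; intros; congruence.
Qed.

Hypothesis Hax : forall r, eval r L_axiom.

Lemma sound : forall A, LProv A -> forall r, eval r A.
Proof.
  induction 1; intros r.
  - apply Hax.
  - destruct H as [P [s [HP [_ HA]]]]. subst. apply pinst_eval, HP.
  - simpl. destruct (classic (eval r (subst x y A))); [right; auto|left].
    intros H2. apply H0. apply subst_lemma; auto.
  - simpl. destruct (classic (forall d, ~ eval (upd r x d) A \/ eval (upd r x d) B)); [right|left; tauto].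
    destruct (classic (eval r A)); [right|left; auto]. intros d. destruct (H0 d); auto.
    exfalso; apply H2; rewrite (coinc A _ r); auto. intros z Hz; unfold upd; destruct (Nat.eqb_spec z x); subst; congruence.
  - simpl in IHLProv1. destruct (IHLProv1 r) as [h|h]; auto. exfalso; apply h; auto.
  - simpl; auto.
Qed.
End Sem.

Section Ax.
Variable D : Type.
Variable E : D -> D -> Prop.
Hypothesis HE : forall a b, E a b <-> ((exists x, E x a /\ E x b) /\ forall x y, E x a -> E y a -> E x y).
Lemma ax_ok : forall r, eval D E r L_axiom.
Proof.
  intros r. simpl. unfold upd; simpl. intros a b.
  assert (HP : (~ ~ (forall d : D, ~ ~ (~ E d a \/ ~ E d b))) <-> ~ (exists x, E x a /\ E x b)).
  { split.
    - intros H [x [H1 H2]]. apply H; intros H'. apply (H' x); intros [h|h]; auto.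
    - intros H H'. apply H'. intros d H''. apply H''. destruct (classic (E d a)); auto. right; intros h; apply H; eauto. }
  assert (HQ : (forall d d0 : D, ~ ~ (~ E d a \/ ~ E d0 a) \/ E d d0) <-> (forall x y, E x a -> E y a -> E x y)).
  { split.
    - intros H x y H1 H2. destruct (H x y) as [h|h]; auto. exfalso; apply h; intros [h'|h']; auto.
    - intros H d d0. destruct (classic (E d a)), (classic (E d0 a)); auto; left; tauto. }
  rewrite HP, HQ. pose proof (HE a b). tauto.
Qed.
End Ax.

Section Model.
Variable U : Type.
Variable R : U -> U -> Prop.
Hypothesis Rrefl : forall u, R u u.
Hypothesis Rsym : forall u v, R u v -> R v u.
Hypothesis Rtrans : forall u v t, R u v -> R v t -> R u t.
Definition epsM (a b : U -> Prop) : Prop :=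
  (exists u v, a u /\ b v /\ R u v) /\ (forall z1 z2, a z1 -> a z2 -> R z1 z2).

Lemma epsM_ax : forall a b, epsM a b <->
  ((exists x, epsM x a /\ epsM x b) /\ forall x y, epsM x a -> epsM y a -> epsM x y).
Proof.
  intros a b; split.
  - intros [[u [v [Hu [Hv Huv]]]] Hs]. split.
    + exists a. split; split; eauto 6.
    + intros x y [[p [q [Hp [Hq Hpq]]]] Hx] [[p' [q' [Hp' [Hq' Hpq']]]] Hy]. split.
      * exists p, p'. repeat split; auto. eauto.
      * auto.
  - intros [[x [[[p [q [Hp [Hq Hpq]]]] Hx] [[p' [q' [Hp' [Hq' Hpq']]]] _]]] H2]. split.
    + exists q, q'. repeat split; auto. apply Rtrans with p; auto. apply Rtrans with p'; auto.
    + intros z1 z2 H1 H3.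
      assert (E : epsM (fun t => t = z1) (fun t => t = z2)).
      { apply H2; split; try (intros; subst; auto).
        exists z1, z1; auto. exists z2, z2; auto. }
      destruct E as [[u [v [-> [-> h]]]] _]. auto.
Qed.
End Model.

Section Concrete.
Variable w : nat -> nat -> bool.
Hypothesis C1 : forall a b, w a b = true -> w a a = true.
Hypothesis C2 : forall a b c, w a b = true -> w b c = true -> w a c = true.
Hypothesis C3 : forall a b, w a b = true -> w b b = true -> w b a = true.

Definition Uw : Type := (nat + (nat * bool))%type.
Definition Rw (u v : Uw) : Prop :=
  match u, v with
  | inl x, inl y => x = y \/ (w x x = true /\ w y y = true /\ w x y = true)
  | inr p, inr q => p = q
  | _, _ => False
  end.
Definition sig (a : nat) : Uw -> Prop := fun t =>
  match t with
  | inl u => w u a = true /\ w u u = true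
  | inr (i, _) => i = a /\ w a a = false
  end.

Lemma Rw_refl : forall u, Rw u u.
Proof. intros [x|p]; simpl; auto. Qed.
Lemma Rw_sym : forall u v, Rw u v -> Rw v u.
Proof. intros [x|p] [y|q]; simpl; intuition. Qed.
Lemma Rw_trans : forall u v t, Rw u v -> Rw v t -> Rw u t.
Proof.
  intros [x|p] [y|q] [z|s]; simpl; intuition; subst; eauto.

Qed.

Lemma key : forall a b, epsM Uw Rw (sig a) (sig b) <-> w a b = true.
Proof.
  intros a b; split.
  - intros [[u [v [Hu [Hv Huv]]]] Hs].
    destruct u as [x|[i bi]]; destruct v as [y|[j bj]]; simpl in *; try contradiction.
    + destruct Hu as [Hxa Hxx]; destruct Hv as [Hyb Hyy].
      destruct (w a a) eqn:Haa.
      2: { exfalso. specialize (Hs (inr (a, true)) (inr (a, false))). simpl in Hs.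
           assert (h : (a, true) = (a, false)) by auto. discriminate. }
      assert (Hax : w a x = true) by (apply C3; auto).
      destruct Huv as [->|[_ [_ Hxy]]]; [apply C2 with y; auto | apply C2 with x; auto; apply C2 with y; auto].
    + destruct Hu as [-> Haa]. exfalso.
      specialize (Hs (inr (a, true)) (inr (a, false))). simpl in Hs.
      assert (h : (a, true) = (a, false)) by auto. discriminate.
  - intros H. assert (Haa : w a a = true) by eauto. split.
    + exists (inl a), (inl a). simpl. repeat split; auto.
    + intros [x|[i bi]] [y|[j bj]]; simpl; intros h1 h2.
      * intuition. right. repeat split; auto. eauto.
      * destruct h2; congruence.
      * destruct h1; congruence.
      * destruct h1; congruence.
Qed.
End Concrete.

Fixpoint qeval (w : nat -> nat -> bool) (A : form) : bool :=
  match A with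
  | Eps a b => w a b
  | Or A B => qeval w A || qeval w B
  | Neg A => negb (qeval w A)
  | All _ _ => false
  end.

Fixpoint vars (A : form) : list nat :=
  match A with
  | Eps a b => [a; b]
  | Or A B => vars A ++ vars B
  | Neg A => vars A
  | All _ _ => []
  end.

Fixpoint tr (A : form) : pform :=
  match A with
  | Eps a b => PVar (to_nat (a, b))
  | Or A B => POr (tr A) (tr B)
  | Neg A => PNeg (tr A)
  | All _ _ => PVar 0
  end.

Definition sb (n : nat) : form := let (a, b) := of_nat n in Eps a b.

Lemma pinst_tr : forall B, qf B = true -> pinst sb (tr B) = B.
Proof.
  induction B; simpl; intros H; try discriminate.
  - change (sb (to_nat (n, n0)) = Eps n n0). unfold sb. rewrite cancel_of_to. reflexivity.
  - apply andb_true_iff in H as [H1 H2]; rewrite IHB1, IHB2; auto.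
  - rewrite IHB; auto.
Qed.

Lemma peval_tr : forall v B, qf B = true -> peval v (tr B) = qeval (fun a b => v (to_nat (a, b))) B.
Proof.
  induction B; simpl; intros H; try discriminate; auto.
  - apply andb_true_iff in H as [H1 H2]; rewrite IHB1, IHB2; auto.
  - rewrite IHB; auto.
Qed.

Lemma qeval_agree : forall V w w' B, (forall a b, In a V -> In b V -> w a b = w' a b) ->
  incl (vars B) V -> qeval w B = qeval w' B.
Proof.
  intros V w w' B H; induction B; simpl; intros Hi; auto.
  - apply H; apply Hi; simpl; auto.
  - apply incl_app_inv in Hi as [H1 H2]; rewrite IHB1, IHB2; auto.
  - rewrite IHB; auto.
Qed.

Definition ax1 a b := Imp (Eps a b) (Eps a a).
Definition ax2 a b c := Imp (And (Eps a b) (Eps b c)) (Eps a c).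
Definition ax3 a b := Imp (And (Eps a b) (Eps b b)) (Eps b a).

Definition axs (V : list nat) : list form :=
  flat_map (fun a => flat_map (fun b => ax1 a b :: ax3 a b :: map (fun c => ax2 a b c) V) V) V.

Lemma axs_prop : forall V B, In B (axs V) -> qf B = true /\ HProv B.
Proof.
  intros V B H. unfold axs in H. apply in_flat_map in H as [a [_ H]].
  apply in_flat_map in H as [b [_ H]]. destruct H as [<-|[<-|H]].
  - split; [reflexivity|apply H_ax1].
  - split; [reflexivity|apply H_ax3].
  - apply in_map_iff in H as [c [<- _]]. split; [reflexivity|apply H_ax2].
Qed.

Lemma axs_in : forall V a b c, In a V -> In b V -> In c V ->
  In (ax1 a b) (axs V) /\ In (ax3 a b) (axs V) /\ In (ax2 a b c) (axs V).
Proof.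
  intros V a b c Ha Hb Hc. unfold axs. repeat split; apply in_flat_map; exists a; split; auto;
  apply in_flat_map; exists b; split; auto; simpl; auto.
  right; right. apply in_map_iff; eauto.
Qed.

Lemma fold_H : forall l A, (forall B, In B l -> HProv B) -> HProv (fold_right Imp A l) -> HProv A.
Proof.
  induction l; simpl; intros A H1 H2; auto.
  apply IHl; auto. eapply H_mp; eauto.
Qed.

Lemma fold_qf : forall l A, (forall B, In B l -> qf B = true) -> qf A = true -> qf (fold_right Imp A l) = true.
Proof.
  induction l; simpl; intros A H1 H2; auto.
  rewrite H1, IHl; auto.
Qed.

Lemma fold_q : forall w l A, ((forall B, In B l -> qeval w B = true) -> qeval w A = true) ->
  qeval w (fold_right Imp A l) = true.
Proof.
  induction l; simpl; intros A H; auto.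
  - destruct (qeval w a) eqn:E; simpl; auto.
    apply IHl. intros H'; apply H. intros B [<-|HB]; auto.
Qed.

Definition closure (w : nat -> nat -> bool) : Prop :=
  (forall a b, w a b = true -> w a a = true) /\
  (forall a b c, w a b = true -> w b c = true -> w a c = true) /\
  (forall a b, w a b = true -> w b b = true -> w b a = true).

Lemma completeness : forall A, qf A = true ->
  (forall w, closure w -> qeval w A = true) -> HProv A.
Proof.
  intros A HqA HA. set (V := vars A).
  apply (fold_H (axs V)). { intros B HB; apply (axs_prop V B HB). }
  apply H_taut. exists (tr (fold_right Imp A (axs V))), sb.
  assert (Hq : qf (fold_right Imp A (axs V)) = true).
  { apply fold_qf; auto. intros B HB; apply (axs_prop V B HB). }
  split; [|split; [intros n; unfold sb; destruct (of_nat n); reflexivity| apply pinst_tr; auto]].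
  intros v. rewrite peval_tr by auto. set (w' := fun a b => v (to_nat (a, b))).
  apply fold_q. intros Hax.
  set (w := fun a b => if in_dec Nat.eq_dec a V then if in_dec Nat.eq_dec b V then w' a b else false else false).
  assert (Hw : forall a b, w a b = true -> In a V /\ In b V /\ w' a b = true).
  { intros a b; unfold w; destruct (in_dec Nat.eq_dec a V), (in_dec Nat.eq_dec b V); intuition discriminate. }
  assert (Hw' : forall a b, In a V -> In b V -> w a b = w' a b).
  { intros a b Ha Hb; unfold w; destruct (in_dec Nat.eq_dec a V), (in_dec Nat.eq_dec b V); tauto. }
  rewrite <- (qeval_agree V w w' A Hw' (incl_refl _)).
  apply HA. split; [|split].
  - intros a b H. destruct (Hw _ _ H) as [Ha [Hb H']]. rewrite Hw' by auto.
    destruct (axs_in V a b b Ha Hb Hb) as [I1 _]. specialize (Hax _ I1). simpl in Hax.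
    rewrite H' in Hax. exact Hax.
  - intros a b c H1 H2. destruct (Hw _ _ H1) as [Ha [Hb H1']]. destruct (Hw _ _ H2) as [_ [Hc H2']].
    rewrite Hw' by auto.
    destruct (axs_in V a b c Ha Hb Hc) as [_ [_ I]]. specialize (Hax _ I). simpl in Hax.
    rewrite H1', H2' in Hax. exact Hax.
  - intros a b H1 H2. destruct (Hw _ _ H1) as [Ha [Hb H1']]. destruct (Hw _ _ H2) as [_ [_ H2']].
    rewrite Hw' by auto.
    destruct (axs_in V a b b Ha Hb Hb) as [_ [I _]]. specialize (Hax _ I). simpl in Hax.
    rewrite H1', H2' in Hax. exact Hax.
Qed.

Lemma eval_qeval : forall w (C1 : forall a b, w a b = true -> w a a = true)
  (C2 : forall a b c, w a b = true -> w b c = true -> w a c = true)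
  (C3 : forall a b, w a b = true -> w b b = true -> w b a = true) A, qf A = true ->
  (eval (Uw -> Prop) (epsM Uw (Rw w)) (sig w) A <-> qeval w A = true).
Proof.
  intros w C1 C2 C3; induction A; simpl; intros H; try discriminate.
  - apply key; auto.
  - apply andb_true_iff in H as [H1 H2]. rewrite IHA1, IHA2, orb_true_iff; tauto.
  - rewrite IHA, negb_true_iff by auto. destruct (qeval w A); split; congruence.
Qed.

Theorem theorem6p5 : forall A : form, qf A = true -> LProv A -> HProv A.
Proof.
  intros A Hq HL. apply completeness; auto.
  intros w [C1 [C2 C3]].
  apply (eval_qeval w C1 C2 C3); auto.
  apply (sound (Uw -> Prop) (epsM Uw (Rw w))); auto.
  apply ax_ok. apply epsM_ax.
  - apply Rw_refl.
  - apply Rw_sym; auto.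
  - apply Rw_trans; auto.
Qed.
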